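(* Let $(L_i)_{i\in I}$ be a family of lattices with zero such that $L_i\cap L_j=\{0\}$ for all distinct $i,j\in I$, and let $L=\coprod^0_{i\in I}L_i$, with each $L_i$ identified with its canonical copy in $L$; put $P=\bigcup_{i\in I}L_i\subseteq L$. Adjoin a new largest element $\infty$ to $L$ and set $\overline{L}_i=L_i\cup\{\infty\}$. Then for each $x\in L$ and each $i\in I$ there exist a largest element $x_{(i)}$ of $L_i$ below $x$ and a least element $x^{(i)}$ of $\overline{L}_i$ above $x$ (with respect to the ordering of $L\cup\{\infty\}$), and for all $x,y\in L$ and $i\in I$: (a) $p_{(i)}=p^{(i)}=p$ if $p\in L_i$; (b) $p_{(i)}=0$ and $p^{(i)}=\infty$ if $p\in P\setminus L_i$; (c) $(x\vee y)_{(i)}=x_{(i)}\vee y_{(i)}$ and $(x\wedge y)_{(i)}=x_{(i)}\wedge y_{(i)}$; (d) $(x\vee y)^{(i)}=x^{(i)}\vee y^{(i)}$; (e) $(x\wedge y)^{(i)}=0$ if $x^{(j)}\wedge y^{(j)}=0$ for some $j\in I$, and $(x\wedge y)^{(i)}=x^{(i)}\wedge y^{(i)}$ otherwise. (Joins and meets on the right-hand sides are computed in $\overline{L}_i$, where $\infty$ is the top element.)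
   Context: $\coprod^0_{i\in I}L_i$ denotes the coproduct of a family of lattices with zero in the category of lattices with zero and zero-preserving lattice homomorphisms; the canonical maps $L_i\to L$ are embeddings and identify the zeros of all $L_i$. *)

(* Defs.v *)
From HB Require Import structures.
From mathcomp Require Import all_boot all_order.
Set Implicit Arguments. Unset Strict Implicit. Unset Printing Implicit Defensive.
Import Order.Theory.
Local Open Scope order_scope.

Definition hom0 (d1 d2 : Order.disp_t) (A : bLatticeType d1) (B : bLatticeType d2)
  (f : A -> B) : Prop :=
  [/\ f \bot = \bot,
      forall a b, f (a `|` b) = f a `|` f b &
      forall a b, f (a `&` b) = f a `&` f b].

Definition is_coproduct0 (I : Type) (d : I -> Order.disp_t)
  (Li : forall i, bLatticeType (d i)) (dL : Order.disp_t) (L : bLatticeType dL)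
  (e : forall i, Li i -> L) : Prop :=
  (forall i, hom0 (e i)) /\
  forall (dK : Order.disp_t) (K : bLatticeType dK) (f : forall i, Li i -> K),
    (forall i, hom0 (f i)) ->
    (exists g : L -> K, hom0 g /\ forall i a, g (e i a) = f i a) /\
    (forall g1 g2 : L -> K,
        hom0 g1 -> (forall i a, g1 (e i a) = f i a) ->
        hom0 g2 -> (forall i a, g2 (e i a) = f i a) ->
        forall x, g1 x = g2 x).

(* \overline{L}_i = L_i \cup {oo} is modelled by option, with None = oo (top). *)
Definition ole (d : Order.disp_t) (A : bLatticeType d) (u v : option A) : bool :=
  match u, v with
  | _, None => true
  | None, Some _ => false
  | Some a, Some b => (a <= b)
  end.

Definition ojoin (d : Order.disp_t) (A : bLatticeType d) (u v : option A) : option A :=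
  match u, v with
  | Some a, Some b => Some (a `|` b)
  | _, _ => None
  end.

Definition omeet (d : Order.disp_t) (A : bLatticeType d) (u v : option A) : option A :=
  match u, v with
  | Some a, Some b => Some (a `&` b)
  | Some a, None => Some a
  | None, v => v
  end.

Definition le_bar (d dL : Order.disp_t) (A : bLatticeType d) (L : bLatticeType dL)
  (e : A -> L) (x : L) (u : option A) : bool :=
  match u with None => true | Some a => (x <= e a) end.

Definition is_lower (d dL : Order.disp_t) (A : bLatticeType d) (L : bLatticeType dL)
  (e : A -> L) (x : L) (a : A) : Prop :=
  e a <= x /\ forall b : A, e b <= x -> b <= a.

Definition is_upper (d dL : Order.disp_t) (A : bLatticeType d) (L : bLatticeType dL)
  (e : A -> L) (x : L) (u : option A) : Prop :=
  le_bar e x u /\ forall v : option A, le_bar e x v -> ole u v.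

(* Main.v *)
Require Import Defs.
From HB Require Import structures.
From mathcomp Require Import all_boot all_order.
From mathcomp Require Import boolp.
Import Order.Theory.
Local Open Scope order_scope.

Fact sdisp : Order.disp_t. Proof. exact: Order.Disp tt tt. Qed.

Section SubL.
Variables (dL : Order.disp_t) (L : bLatticeType dL) (P : L -> Prop).
Hypothesis (P0 : P \bot) (PU : forall x y, P x -> P y -> P (x `|` y))
  (PI : forall x y, P x -> P y -> P (x `&` y)).
Definition Pb : pred L := fun x => `[< P x >].
Definition SL of P \bot & (forall x y, P x -> P y -> P (x `|` y)) & (forall x y, P x -> P y -> P (x `&` y)) := {x : L | Pb x}.
Notation SLt := (SL P0 PU PI).
HB.instance Definition _ := [isSub of SLt for sval].
HB.instance Definition _ := [Choice of SLt by <:].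
Lemma SL_I : meet_closed Pb.
Proof. by move=> x y /asboolP ? /asboolP ?; apply/asboolP; auto. Qed.
Lemma SL_U : join_closed Pb.
Proof. by move=> x y /asboolP ? /asboolP ?; apply/asboolP; auto. Qed.
Lemma SL_0 : \bot \in Pb.
Proof. by apply/asboolP. Qed.
HB.instance Definition _ := Order.SubChoice_isBSubLattice.Build dL L Pb sdisp SLt SL_I SL_U SL_0.
Lemma SL_valU (x y : SLt) : val (x `|` y) = val x `|` val y.
Proof. by []. Qed.
Lemma SL_valI (x y : SLt) : val (x `&` y) = val x `&` val y.
Proof. by []. Qed.
Lemma SL_val0 : val (\bot : SLt) = \bot.
Proof. by []. Qed.
End SubL.

Lemma hom0_mono (d1 d2 : Order.disp_t) (A : bLatticeType d1) (B : bLatticeType d2)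
  (f : A -> B) : hom0 f -> forall x y, x <= y -> f x <= f y.
Proof. by case=> _ Hj _ x y; rewrite !leEjoin -Hj => /eqP ->. Qed.

Lemma coprod_ind (I : Type) (d : I -> Order.disp_t)
  (Li : forall i, bLatticeType (d i)) (dL : Order.disp_t) (L : bLatticeType dL)
  (e : forall i, Li i -> L) (Hcop : @is_coproduct0 I d Li dL L e)
  (P : L -> Prop) : P \bot -> (forall x y, P x -> P y -> P (x `|` y)) ->
  (forall x y, P x -> P y -> P (x `&` y)) -> (forall i a, P (e i a)) -> forall x, P x.
Proof.
move=> P0 PU PI Pe x.
case: Hcop => He Hu.
have Pb_e i a : @Pb _ _ P (e i a) by apply/asboolP.
pose f i a : @SL _ _ P P0 PU PI := exist _ (e i a) (Pb_e i a).
have Hf : forall i, hom0 (f i).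
  move=> i; case: (He i) => H0 HJ HM; split.
  - by apply: val_inj; rewrite /= H0.
  - by move=> a b; apply: val_inj; rewrite /= HJ.
  - by move=> a b; apply: val_inj; rewrite /= HM.
have [[g [Hg Hge]] _] := Hu _ _ f Hf.
have [_ Huniq] := Hu _ _ e He.
have Hid : hom0 (fun y : L => y) by [].
have Hvg : hom0 (fun y => val (g y)).
  case: Hg => H0 HJ HM; split.
  - by rewrite H0.
  - by move=> a b; rewrite HJ.
  - by move=> a b; rewrite HM.
have := Huniq _ _ Hvg _ Hid _ x.
rewrite /= => <-; last by [].
  by have /asboolP := valP (g x).
by move=> i a; rewrite Hge.
Qed.

Section Main.
Variables (I : Type) (d : I -> Order.disp_t)
  (Li : forall i, bLatticeType (d i)) (dL : Order.disp_t) (L : bLatticeType dL)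
  (e : forall i, Li i -> L) (Hcop : @is_coproduct0 I d Li dL L e).

Definition proj_f (i j : I) (a : Li j) : Li i :=
  match pselect (j = i) with left E => eq_rect j Li a i E | right _ => \bot end.

Lemma proj_f_hom i j : hom0 (proj_f i j).
Proof.
rewrite /proj_f; case: (pselect (j = i)) => [E|NE].
  by case: i / E.
by split => //; rewrite ?joinxx ?meetxx.
Qed.

Lemma proj_f_eq i a : proj_f i i a = a.
Proof.
rewrite /proj_f; case: (pselect (i = i)) => [E|] //.
by rewrite (Prop_irrelevance E erefl).
Qed.

Lemma proj_f_neq i j a : j <> i -> proj_f i j a = \bot.
Proof. by rewrite /proj_f; case: (pselect (j = i)). Qed.

Lemma low_spec i : exists g : L -> Li i, hom0 g /\ (forall a, g (e i a) = a) /\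
  (forall j b, j <> i -> g (e j b) = \bot) /\ (forall x, is_lower (e i) x (g x)).
Proof.
have [[g [Hg Hge]] _] := Hcop.2 _ _ _ (proj_f_hom i).
have He := Hcop.1 i.
exists g; split => //; split; first by move=> a; rewrite Hge proj_f_eq.
split; first by move=> j b ji; rewrite Hge proj_f_neq.
move=> x; split.
  elim/(@coprod_ind _ _ _ _ _ _ Hcop): x.
  - by case: Hg => -> _ _; case: He => -> _ _.
  - move=> x y Hx Hy; case: Hg => _ -> _; case: He => _ -> _.
    by rewrite leUx !lexU2 ?Hx ?Hy ?orbT.
  - move=> x y Hx Hy; case: Hg => _ _ ->; case: He => _ _ ->.
    by rewrite lexI !leIx2 ?Hx ?Hy ?orbT.
  - move=> j a; rewrite Hge; case: (pselect (j = i)) => [E|NE].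
      by subst j; rewrite proj_f_eq.
    by rewrite proj_f_neq //; case: He => -> _ _; rewrite le0x.
move=> b Hb; rewrite -[b]proj_f_eq -Hge; exact: hom0_mono Hb.
Qed.
End Main.
Fact kdisp : Order.disp_t. Proof. exact: Order.Disp tt tt. Qed.

Section K.
Variables (I : Type) (d : I -> Order.disp_t) (Li : forall i, bLatticeType (d i)).

Definition nzo (j : I) : choiceType := option {a : Li j | a != \bot}.
Definition Kt := option (forall j, nzo j).
HB.instance Definition _ := Choice.on Kt.

Definition cle j (u v : nzo j) : bool :=
  match u, v with _, None => true | None, Some _ => false
  | Some a, Some b => val a <= val b end.

Lemma nzU j (a b : {a : Li j | a != \bot}) : val a `|` val b != \bot.
Proof. by rewrite join_eq0 negb_and (valP a). Qed.

Definition cjoin j (u v : nzo j) : nzo j :=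
  match u, v with Some a, Some b => Some (exist (fun x : Li j => x != \bot) (val a `|` val b) (@nzU _ a b)) | _, _ => None end.
Definition cmeet j (u v : nzo j) : nzo j :=
  match u, v with Some a, Some b => insub (val a `&` val b)
  | Some a, None => Some a | None, v => v end.
Definition czero j (u v : nzo j) : bool :=
  match u, v with Some a, Some b => val a `&` val b == \bot | _, _ => false end.

Arguments cle {j}. Arguments cjoin {j}. Arguments cmeet {j}. Arguments czero {j}.
Definition Kle (x y : Kt) : bool :=
  match x, y with None, _ => true | Some _, None => false
  | Some u, Some v => `[< forall j, cle (u j) (v j) >] end.
Definition Kjoin (x y : Kt) : Kt :=
  match x, y with None, y => y | x, None => x
  | Some u, Some v => Some (fun j => cjoin (u j) (v j)) end.
Definition Kmeet (x y : Kt) : Kt :=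
  match x, y with Some u, Some v =>
    if `[< exists j, czero (u j) (v j) >] then None
    else Some (fun j => cmeet (u j) (v j))
  | _, _ => None end.

Lemma cle_refl j (u : nzo j) : cle u u.
Proof. by case: u => //= a. Qed.
Lemma cle_anti j (u v : nzo j) : cle u v -> cle v u -> u = v.
Proof.
case: u; case: v => //= a b H1 H2; congr Some; apply: val_inj.
by apply: le_anti; rewrite H1 H2.
Qed.
Lemma cle_trans j (u v w : nzo j) : cle u v -> cle v w -> cle u w.
Proof.
case: w => //=; case: v => //=; case: u => //= a b c; exact: le_trans.
Qed.
Lemma cle_join j (u v w : nzo j) : cle (cjoin u v) w = cle u w && cle v w.
Proof.
case: w => [c|]; last by case: u; case: v.
by case: u => [a|]; case: v => [b|] //=; rewrite ?andbF // leUx.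
Qed.
Lemma cle_czero j (u v w : nzo j) : cle w u -> cle w v -> czero u v -> False.
Proof.
case: u => [a|] //; case: v => [b|] //; case: w => [c|] //= H1 H2 /eqP H.
have : val c <= val a `&` val b by rewrite lexI H1 H2.
by rewrite H lex0 (negbTE (valP c)).
Qed.
Lemma cle_meet j (u v w : nzo j) : ~~ czero u v -> cle w (cmeet u v) = cle w u && cle w v.
Proof.
case: u => [a|]; case: v => [b|] => /= H; try by case: w => [c|] //=; rewrite ?andbT.
rewrite (insubT (fun x => x != \bot) H).
by case: w => [c|] //=; rewrite lexI.
Qed.

Lemma Kle_refl : reflexive Kle.
Proof. by case=> //= u; apply/asboolP => j; exact: cle_refl. Qed.
Lemma Kle_anti : antisymmetric Kle.
Proof.
case=> [u|]; case=> [v|] //= /andP[/asboolP H1 /asboolP H2].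
congr Some; apply: functional_extensionality_dep => j; exact: cle_anti.
Qed.
Lemma Kle_trans : transitive Kle.
Proof.
case=> [v|]; case=> [u|]; case=> [w|] //= /asboolP H1 /asboolP H2.
by apply/asboolP => j; exact: cle_trans (H1 j) (H2 j).
Qed.

HB.instance Definition _ := Order.Le_isPOrder.Build kdisp Kt Kle_refl Kle_anti Kle_trans.

Lemma KjoinP (x y z : Kt) : (Kjoin x y <= z) = (x <= z) && (y <= z).
Proof.
case: x => [u|]; case: y => [v|]; case: z => [w|] //=; rewrite ?andbT //.
apply/idP/andP => [/asboolP H | [/asboolP H1 /asboolP H2]].
  by split; apply/asboolP => j; move: (H j); rewrite cle_join => /andP[].
by apply/asboolP => j; rewrite cle_join H1 H2.
Qed.

Lemma KmeetP (x y z : Kt) : (x <= Kmeet y z) = (x <= y) && (x <= z).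
Proof.
case: x => [w|] //; case: y => [u|]; case: z => [v|] //=; rewrite ?andbF //.
have [[j Hj]|H] := pselect (exists j, czero (u j) (v j)).
  rewrite (asboolT (ex_intro _ j Hj)) /=; apply/esym/negbTE.
  apply/negP => /andP[/asboolP H1 /asboolP H2]; exact: cle_czero (H1 j) (H2 j) Hj.
rewrite (asboolF H) /=.
have Hn j : ~~ czero (u j) (v j) by apply/negP => Hj; apply: H; exists j.
apply/idP/andP => [/asboolP H0 | [/asboolP H1 /asboolP H2]].
  by split; apply/asboolP => j; move: (H0 j); rewrite cle_meet // => /andP[].
by apply/asboolP => j; rewrite cle_meet // H1 H2.
Qed.

HB.instance Definition _ := Order.POrder_MeetJoin_isLattice.Build kdisp Kt KmeetP KjoinP.
Lemma Kle0 (x : Kt) : (None : Kt) <= x. Proof. by []. Qed.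
HB.instance Definition _ := Order.hasBottom.Build kdisp Kt Kle0.

Lemma KjoinE (x y : Kt) : x `|` y = Kjoin x y. Proof. by []. Qed.
Lemma KmeetE (x y : Kt) : x `&` y = Kmeet x y. Proof. by []. Qed.
Lemma K0E : (\bot : Kt) = None. Proof. by []. Qed.
Lemma KleE (x y : Kt) : (x <= y) = Kle x y. Proof. by []. Qed.
End K.
Arguments cle {I d Li j}. Arguments cjoin {I d Li j}. Arguments cmeet {I d Li j}. Arguments czero {I d Li j}.
Arguments Kjoin {I d Li}. Arguments Kmeet {I d Li}. Arguments Kle {I d Li}.

Section Up.
Variables (I : Type) (d : I -> Order.disp_t)
  (Li : forall i, bLatticeType (d i)) (dL : Order.disp_t) (L : bLatticeType dL)
  (e : forall i, Li i -> L) (Hcop : @is_coproduct0 I d Li dL L e).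

Local Notation nz j := {a : Li j | a != \bot}.
Local Notation K := (@Kt _ _ Li).

Definition single j (a : nz j) : forall k, @nzo _ _ Li k := fun k =>
  match pselect (j = k) with left E => Some (eq_rect j (fun k => nz k) a k E)
  | right _ => None end.

Arguments single {j}.
Lemma single_eq j (a : nz j) : single a j = Some a.
Proof.
rewrite /single; case: (pselect (j = j)) => [E|] //.
by rewrite (Prop_irrelevance E erefl).
Qed.
Lemma single_neq j (a : nz j) k : j <> k -> single a k = None.
Proof. by rewrite /single; case: (pselect (j = k)). Qed.

Definition fK j (a : Li j) : K := omap (@single j) (insub a).

Arguments fK {j}.
Lemma fK0 j (a : Li j) : a = \bot -> fK a = None.
Proof. by move=> ->; rewrite /fK insubF ?eqxx. Qed.
Lemma fKnz j (a : Li j) (H : a != \bot) :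
  fK a = Some (single (exist (fun x => x != \bot) a H)).
Proof. by rewrite /fK (insubT (fun x => x != \bot) H). Qed.

Arguments fKnz {j a}.
Lemma fK_hom j : hom0 (@fK j).
Proof.
split.
- exact: fK0.
- move=> a b; rewrite KjoinE.
  have [->|Ha] := eqVneq a \bot; first by rewrite join0x (@fK0 j \bot erefl).
  have [->|Hb] := eqVneq b \bot; first by rewrite joinx0 (@fK0 j \bot erefl); case: (fK a).
  have Hab : a `|` b != \bot by rewrite join_eq0 negb_and Ha.
  rewrite (fKnz Hab) (fKnz Ha) (fKnz Hb) /=; congr Some.
  apply: functional_extensionality_dep => k.
  case: (pselect (j = k)) => [E|NE]; last by rewrite !single_neq.
  subst k; rewrite !single_eq /=; congr Some; exact: val_inj.
- move=> a b; rewrite KmeetE.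
  have [->|Ha] := eqVneq a \bot; first by rewrite meet0x (@fK0 j \bot erefl).
  have [->|Hb] := eqVneq b \bot; first by rewrite meetx0 (@fK0 j \bot erefl); case: (fK a).
  rewrite (fKnz Ha) (fKnz Hb) /=.
  have [Hab|Hab] := eqVneq (a `&` b) \bot.
    rewrite fK0 // asboolT //; exists j; rewrite !single_eq /=; exact/eqP.
  rewrite asboolF; last first.
    move=> [k]; case: (pselect (j = k)) => [E|NE]; last by rewrite !single_neq.
    by subst k; rewrite !single_eq /= (negbTE Hab).
  rewrite (fKnz Hab); congr Some.
  apply: functional_extensionality_dep => k.
  case: (pselect (j = k)) => [E|NE]; last by rewrite !single_neq.
  subst k; rewrite !single_eq /= (insubT (fun x => x != \bot) Hab); congr Some; exact: val_inj.
Qed.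

Definition upK i (x : K) : option (Li i) :=
  match x with None => Some \bot | Some u => omap val (u i) end.

Lemma upK_fK_eq i (a : Li i) : upK i (fK a) = Some a.
Proof.
have [->|Ha] := eqVneq a \bot; first by rewrite fK0.
by rewrite (fKnz Ha) /= single_eq.
Qed.

Lemma upK_mono i (p q : K) : p <= q -> ole (upK i p) (upK i q).
Proof.
rewrite KleE; case: p => [u|]; case: q => [v|] //=.
- move=> /asboolP /(_ i); case: (u i) => [a|]; case: (v i) => [b|] //=.
- by move=> _; case: (v i) => [b|] //=; rewrite le0x.
Qed.

Lemma ole_anti i (u v : option (Li i)) : ole u v -> ole v u -> u = v.
Proof.
case: u => [a|]; case: v => [b|] => /= H1 H2; try by []. by congr Some; apply: le_anti; rewrite H1 H2.
Qed.

Lemma upK_join i (p q : K) : upK i (Kjoin p q) = ojoin (upK i p) (upK i q).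
Proof.
case: p => [u|]; case: q => [v|] /=.
- by case: (u i) => [a|]; case: (v i) => [b|].
- by case: (u i) => [a|] //=; rewrite joinx0.
- by case: (v i) => [b|] //=; rewrite join0x.
- by rewrite joinxx.
Qed.

Lemma upK_meet_bot (p q : K) :
  (exists j, omeet (upK j p) (upK j q) = Some \bot) -> Kmeet p q = None.
Proof.
case: p => [u|] //; case: q => [v|] //= [j Hj].
rewrite asboolT //; exists j; move: Hj.
case: (u j) => [a|]; case: (v j) => [b|] //= [Ha]; rewrite ?Ha //.
- by case: a Ha => a' /= Ha' Ha; move: Ha'; rewrite Ha eqxx.
- by case: b Ha => b' /= Hb' Hb; move: Hb'; rewrite Hb eqxx.
Qed.

Lemma upK_meet i (p q : K) :
  ~ (exists j, omeet (upK j p) (upK j q) = Some \bot) ->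
  upK i (Kmeet p q) = omeet (upK i p) (upK i q).
Proof.
case: p => [u|]; last first.
  move=> H; exfalso; apply: H; exists i; case: q => [v|] /=.
    by case: (v i) => [b|] /=; rewrite ?meet0x.
  by rewrite meet0x.
case: q => [v|]; last first.
  move=> H; exfalso; apply: H; exists i => /=.
  by case: (u i) => [a|] /=; rewrite ?meetx0.
move=> H; rewrite /Kmeet asboolF; last first.
  move=> [j Hj]; apply: H; exists j; move: Hj => /=.
  by case: (u j) => [a|]; case: (v j) => [b|] //= /eqP ->.
rewrite /=; case Eu: (u i) => [a|]; case Ev: (v i) => [b|] //=.
have Hab : val a `&` val b != \bot.
  by apply/eqP => Hab; apply: H; exists i; rewrite /= Eu Ev /= Hab.
by rewrite (insubT (fun x => x != \bot) Hab).
Qed.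

Lemma up_spec : exists F : L -> K, hom0 F /\ (forall j a, F (e j a) = fK a) /\
  (forall i x, is_upper (e i) x (upK i (F x))).
Proof.
have [[F [HF HFe]] _] := Hcop.2 _ _ _ fK_hom.
have He := Hcop.1.
have e0 j : e j \bot = \bot by case: (He j).
exists F; split => //; split => // i x; split; last first.
  case=> [a|] /=; last by case: (upK i (F x)).
  move=> Hx; rewrite -(@upK_fK_eq i a) -HFe; apply: upK_mono; exact: hom0_mono Hx.
move: i; elim/(@coprod_ind _ _ _ _ _ _ Hcop): x.
- by move=> i; case: HF => -> _ _; rewrite /= e0.
- move=> x y Hx Hy i; case: HF => _ -> _; rewrite KjoinE.
  move: (Hx i) (Hy i); case: (F x) => [u|]; case: (F y) => [v|] //=.
  + case: (u i) => [a|]; case: (v i) => [b|] //= H1 H2.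
    by case: (He i) => _ -> _; rewrite leUx !lexU2 ?H1 ?H2 ?orbT.
  + by case: (u i) => [a|] //= H1; rewrite e0 lex0 => /eqP ->; rewrite joinx0.
  + by case: (v i) => [b|] //=; rewrite e0 lex0 => /eqP -> H2; rewrite join0x.
  + by rewrite e0 !lex0 => /eqP -> /eqP ->; rewrite joinxx.
- move=> x y Hx Hy i; case: HF => _ _ ->; rewrite KmeetE.
  have Hxy0 : x `&` y <= e i \bot -> le_bar (e i) (x `&` y) (Some \bot) by [].
  case Ex: (F x) => [u|]; last first.
    by move: (Hx i); rewrite Ex /= => H; exact: le_trans (leIl x y) H.
  case Ey: (F y) => [v|]; last first.
    by move: (Hy i); rewrite Ey /= => H; exact: le_trans (leIr y x) H.
  rewrite /Kmeet.
  have [[j Hj]|H] := pselect (exists j, czero (u j) (v j)).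
    rewrite (asboolT (ex_intro _ j Hj)) /= e0 lex0.
    move: (Hx j) (Hy j) Hj; rewrite Ex Ey /=.
    case: (u j) => [a|]; case: (v j) => [b|] //= H1 H2 /eqP Hab.
    have : x `&` y <= e j (val a `&` val b).
      by case: (He j) => _ _ ->; rewrite lexI !leIx2 ?H1 ?H2 ?orbT.
    by rewrite Hab e0 lex0.
  rewrite (asboolF H) /=.
  have Hn : ~~ czero (u i) (v i) by apply/negP => Hj; apply: H; exists i.
  move: (Hx i) (Hy i) Hn; rewrite Ex Ey /=.
  case: (u i) => [a|]; case: (v i) => [b|] //= H1 H2 Hab.
  + rewrite (insubT (fun x => x != \bot) Hab) /=.
    by case: (He i) => _ _ ->; rewrite lexI !leIx2 ?H1 ?H2 ?orbT.
  + by rewrite leIx2 ?H1.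
  + by rewrite leIx2 ?H2 ?orbT.
- move=> j a i; rewrite HFe.
  have [->|Ha] := eqVneq a \bot; first by rewrite fK0 //= !e0.
  rewrite (fKnz Ha).
  case: (pselect (j = i)) => [E|NE]; last by rewrite [upK _ _]/upK single_neq.
  by subst j; rewrite [upK _ _]/upK single_eq /=.
Qed.
End Up.
Arguments upK {I d Li} i x. Arguments fK {I d Li j}. Arguments single {I d Li j} a k.
Arguments fKnz {I d Li j a}. Arguments single_neq {I d Li j} a k.
Arguments upK_fK_eq {I d Li i}. Arguments ole_anti {I d Li i}.
Arguments up_spec {I d Li dL L e}. Arguments low_spec {I d Li dL L e}.
Arguments upK_join {I d Li}. Arguments upK_meet {I d Li}. Arguments upK_meet_bot {I d Li}.

Theorem lemma4p1 (I : Type) (d : I -> Order.disp_t)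
  (Li : forall i, bLatticeType (d i)) (dL : Order.disp_t) (L : bLatticeType dL)
  (e : forall i, Li i -> L)
  (Hcop : @is_coproduct0 I d Li dL L e)
  (Hinj : forall i, injective (e i))
  (Hdisj : forall i j (a : Li i) (b : Li j), i <> j -> e i a = e j b -> a = \bot) :
  (forall i (x : L), exists a : Li i, is_lower (e i) x a) /\
  (forall i (x : L), exists u : option (Li i), is_upper (e i) x u) /\
  (forall (low : forall i, L -> Li i) (up : forall i, L -> option (Li i)),
     (forall i x, is_lower (e i) x (low i x)) ->
     (forall i x, is_upper (e i) x (up i x)) ->
     (* (a) *)
     (forall i (a : Li i), low i (e i a) = a /\ up i (e i a) = Some a) /\
     (* (b) *)
     (forall i j (a : Li j), (forall b : Li i, e i b <> e j a) ->
        low i (e j a) = \bot /\ up i (e j a) = None) /\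
     (* (c) *)
     (forall i (x y : L), low i (x `|` y) = low i x `|` low i y /\
                          low i (x `&` y) = low i x `&` low i y) /\
     (* (d) *)
     (forall i (x y : L), up i (x `|` y) = ojoin (up i x) (up i y)) /\
     (* (e) *)
     (forall i (x y : L),
        ((exists j, omeet (up j x) (up j y) = Some \bot) ->
           up i (x `&` y) = Some \bot) /\
        (~ (exists j, omeet (up j x) (up j y) = Some \bot) ->
           up i (x `&` y) = omeet (up i x) (up i y)))).
Proof.
have He := Hcop.1.
have e0 j : e j \bot = \bot by case: (He j).
have [F [HF [HFe HFu]]] := up_spec Hcop.
split; first by move=> i x; have [g [_ [_ [_ Hg]]]] := low_spec Hcop i; exists (g x).
split; first by move=> i x; exists (upK i (F x)).
move=> low up Hlow Hup.
have lowE i : exists g : L -> Li i, hom0 g /\ (forall a, g (e i a) = a) /\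
    (forall j b, j <> i -> g (e j b) = \bot) /\ (forall x, low i x = g x).
  have [g [Hg [H1 [H2 H3]]]] := low_spec Hcop i; exists g; do !split => //.
  move=> x; case: (Hlow i x) (H3 x) => [La Lb] [Ga Gb].
  by apply: le_anti; rewrite (Lb _ Ga) (Gb _ La).
have upE i x : up i x = upK i (F x).
  case: (Hup i x) (HFu i x) => [Ua Ub] [Fa Fb]; apply: ole_anti; [exact: Ub | exact: Fb].
split.
  move=> i a; have [g [_ [H1 [_ H3]]]] := lowE i.
  by rewrite H3 H1 upE HFe upK_fK_eq.
split.
  move=> i j a Hne.
  have ji : j <> i by move=> E; subst j; exact: (Hne a erefl).
  have [g [_ [_ [H2 H3]]]] := lowE i; rewrite H3 H2 //; split => //.
  have Ha : a != \bot by apply/eqP => Ha; apply: (Hne \bot); rewrite Ha !e0.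
  by rewrite upE HFe (fKnz Ha) [upK _ _]/upK single_neq.
split.
  move=> i x y; have [g [[_ HJ HM] [_ [_ H3]]]] := lowE i.
  by rewrite !H3 HJ HM.
split.
  by move=> i x y; rewrite !upE; case: HF => _ -> _; rewrite KjoinE upK_join.
move=> i x y; rewrite !upE; case: HF => _ _ ->; rewrite KmeetE; split.
  move=> [j Hj]; rewrite upK_meet_bot //; exists j; by rewrite -!upE.
move=> H; rewrite upK_meet // => -[j Hj]; apply: H; exists j; by rewrite !upE.
Qed.
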